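(* Let $\alpha\in[0,\infty)^n$ be non-increasing ($\alpha_1\ge\dots\ge\alpha_n$) and let $f\colon\mathcal{B}_n\to\mathcal{H}_d$ satisfy $\|f(x)-f(y)\|\le d_\alpha(x,y)$ for all $x,y\in\mathcal{B}_n$. Let $X$ be a $\mathcal{B}_n$-valued random vector satisfying the stochastic covering property. Let $\mathcal{F}_0$ be the trivial $\sigma$-field, $\mathcal{F}_l=\sigma(X_1,\dots,X_l)$ for $l\in[n]$, and $M_l=\mathbb{E}[f(X)\mid\mathcal{F}_l]-\mathbb{E}[f(X)\mid\mathcal{F}_{l-1}]$. Then for every $l\in[n]$, $M_l^2\preccurlyeq4\alpha_l^2I_d$.
   Context: $\mathcal{B}_n=\{0,1\}^n$, $\mathcal{H}_d$ the $d\times d$ Hermitian matrices, $\|\cdot\|$ operator norm, $\preccurlyeq$ positive semidefinite order, $I_d$ identity. $d_\alpha(x,y)=\sum_i\alpha_i\mathbf{1}\{x_i\ne y_i\}$. For $S\subset[n]$, $x_S=(x_i)_{i\in S}$; $x\triangleright y$ means $x=y$ or $x=y+e_i$ for some $i$. $X$ satisfies the stochastic covering property if for every $S\subset[n]$ and $x,y\in\mathcal{B}_n$ with $x_S\triangleright y_S$ there is a coupling $(U,V)$ of $\mathcal{L}(X_{S^c}\mid X_S=y_S)$ and $\mathcal{L}(X_{S^c}\mid X_S=x_S)$ with $U\triangleright V$ a.s. *)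

(* Defs.v *)
From HB Require Import structures.
From mathcomp Require Import all_boot all_order all_algebra.
From mathcomp Require Import classical_sets reals.
From mathcomp.real_closed Require Import complex.
Set Implicit Arguments. Unset Strict Implicit. Unset Printing Implicit Defensive.
Import Order.TTheory GRing.Theory Num.Theory.
Local Open Scope ring_scope.

(** The hypercube B_n = {0,1}^n, with coordinates indexed by 'I_n
    (coordinate i : 'I_n is coordinate i+1 of the paper). *)
Definition cube (n : nat) := {ffun 'I_n -> bool}.

Section Defs.
Variable R : realType.
Local Notation C := (R[i]).

Definition adjmx (m k : nat) (A : 'M[C]_(m, k)) : 'M[C]_(k, m) :=
  (map_mx Num.conj A)^T.

Definition is_hermitian (d : nat) (A : 'M[C]_d) : Prop := adjmx A = A.

Definition vnorm (d : nat) (v : 'cV[C]_d) : R :=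
  Num.sqrt (\sum_(j < d) (complex.Re (v j 0) ^+ 2 + complex.Im (v j 0) ^+ 2)).

Definition opnorm (d : nat) (A : 'M[C]_d) : R :=
  sup [set vnorm (A *m v) | v in [set v : 'cV[C]_d | vnorm v = 1]].

(** Loewner order: A <= B iff B - A is positive semidefinite,
    i.e. v^* (B - A) v >= 0 (real and nonnegative) for all v *)
Definition loewner_le (d : nat) (A B : 'M[C]_d) : Prop :=
  forall v : 'cV[C]_d, 0 <= (adjmx v *m (B - A) *m v) 0 0.

Definition agree_on (n : nat) (S : {set 'I_n}) (x y : cube n) : bool :=
  [forall i in S, x i == y i].

Definition covers_on (n : nat) (S : {set 'I_n}) (x y : cube n) : Prop :=
  agree_on S x y \/
  exists2 i, i \in S &
    [/\ x i = true, y i = false &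
        forall j, j \in S -> j != i -> x j = y j].

Definition dalpha (n : nat) (alpha : 'I_n -> R) (x y : cube n) : R :=
  \sum_(i < n) alpha i * (x i != y i)%:R.

(** p is the law (pmf) of a B_n-valued random vector *)
Definition is_pmf (n : nat) (p : cube n -> R) : Prop :=
  (forall x, 0 <= p x) /\ \sum_x p x = 1.

Definition prob_agree (n : nat) (p : cube n -> R) (S : {set 'I_n}) (y : cube n)
  : R := \sum_(z | agree_on S z y) p z.

Definition cond_prob (n : nat) (p : cube n -> R) (S : {set 'I_n})
  (y a : cube n) : R :=
  (\sum_(z | agree_on S z y && agree_on (~: S) z a) p z) / prob_agree p S y.

(** pi : B_n x B_n -> R is a coupling (U,V) of L(X_{S^c} | X_S = y_S) and
    L(X_{S^c} | X_S = x_S) with U |> V a.s.; U and V are the restrictions to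
    S^c of the two components of a pair distributed according to pi. *)
Definition covering_coupling (n : nat) (p : cube n -> R) (S : {set 'I_n})
  (x y : cube n) (pi : cube n -> cube n -> R) : Prop :=
  [/\ forall u v, 0 <= pi u v,
      forall a, \sum_u \sum_v (agree_on (~: S) u a)%:R * pi u v
                = cond_prob p S y a,
      forall a, \sum_u \sum_v (agree_on (~: S) v a)%:R * pi u v
                = cond_prob p S x a
    & forall u v, 0 < pi u v -> covers_on (~: S) u v].

(** Stochastic covering property.  Conditional laws are only defined for
    conditioning events of positive probability. *)
Definition SCP (n : nat) (p : cube n -> R) : Prop :=
  forall (S : {set 'I_n}) (x y : cube n),
    covers_on S x y -> 0 < prob_agree p S x -> 0 < prob_agree p S y ->
    exists pi, covering_coupling p S x y pi.

(** first l coordinates (the paper's X_1..X_l) *)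
Definition prefix_set (n l : nat) : {set 'I_n} := [set i : 'I_n | (i < l)%N].

(** E[f(X) | F_l] evaluated at the outcome X = x *)
Definition condE (n d : nat) (p : cube n -> R) (f : cube n -> 'M[C]_d)
  (l : nat) (x : cube n) : 'M[C]_d :=
  ((prob_agree p (prefix_set n l) x)^-1)%:C%C *:
    \sum_(z | agree_on (prefix_set n l) z x) ((p z)%:C)%C *: f z.

End Defs.

(* Main.v *)
Require Import Defs.
From HB Require Import structures.
From mathcomp Require Import all_boot all_order all_algebra.
From mathcomp Require Import classical_sets reals.
From mathcomp.real_closed Require Import complex.
From mathcomp Require Import ring lra.
Import Order.TTheory GRing.Theory Num.Theory.
Local Open Scope ring_scope.
Set Implicit Arguments. Unset Strict Implicit. Unset Printing Implicit Defensive.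

Section Aux.
Variable R : realType.
Local Notation C := (R[i]).

Definition n2 (z : C) : R := complex.Re z ^+ 2 + complex.Im z ^+ 2.
Definition N2 d (v : 'cV[C]_d) : R := \sum_j n2 (v j 0).

Lemma n2_ge0 z : 0 <= n2 z.
Proof. by rewrite /n2 addr_ge0 ?sqr_ge0. Qed.
Lemma N2_ge0 d (v : 'cV[C]_d) : 0 <= N2 v.
Proof. by apply: sumr_ge0 => j _; apply: n2_ge0. Qed.

Lemma conjE (a b : R) : Num.conj (a +i* b)%C = (a -i* b)%C.
Proof. reflexivity. Qed.
Lemma ReD (a b : C) : complex.Re (a+b) = complex.Re a + complex.Re b.
Proof. by case: a; case: b. Qed.
Lemma ImD (a b : C) : complex.Im (a+b) = complex.Im a + complex.Im b.
Proof. by case: a; case: b. Qed.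
Lemma ReM (w : R) (z : C) : complex.Re (w%:C%C * z) = w * complex.Re z.
Proof. case: z => a b /=. by rewrite mul0r subr0. Qed.
Lemma ImM (w : R) (z : C) : complex.Im (w%:C%C * z) = w * complex.Im z.
Proof. case: z => a b /=. by rewrite mul0r addr0. Qed.
Lemma Re_sum (I : finType) (F : I -> C) : complex.Re (\sum_i F i) = \sum_i complex.Re (F i).
Proof. by apply: (big_morph _ ReD). Qed.
Lemma Im_sum (I : finType) (F : I -> C) : complex.Im (\sum_i F i) = \sum_i complex.Im (F i).
Proof. by apply: (big_morph _ ImD). Qed.
Lemma n2M (a b : C) : n2 (a * b) = n2 a * n2 b.
Proof. case: a => a1 a2; case: b => b1 b2; rewrite /n2 /=. ring. Qed.
Lemma n2N (a : C) : n2 (- a) = n2 a.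
Proof. case: a => a1 a2; rewrite /n2 /=. ring. Qed.
Lemma n2R (r : R) : n2 (r%:C%C) = r ^+ 2.
Proof. rewrite /n2 /=. ring. Qed.
Lemma conj_mul (z : C) : Num.conj z * z = (n2 z)%:C%C.
Proof. case: z => a b; rewrite conjE /n2 /=. congr Complex; ring. Qed.
Lemma n2_eq0 (z : C) : n2 z = 0 -> z = 0.
Proof.
case: z => a b; rewrite /n2 /= => h.
have ha : a = 0 by nra. have hb : b = 0 by nra.
by rewrite ha hb.
Qed.

Lemma jensen (I : finType) (w a : I -> R) : (forall k, 0 <= w k) ->
  (\sum_k w k * a k) ^+ 2 <= (\sum_k w k) * \sum_k w k * a k ^+ 2.
Proof.
move=> w0.
have E1 : (\sum_k w k * a k) ^+ 2 = \sum_k \sum_m w k * w m * (a k * a m).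
  rewrite expr2 mulr_suml; apply: eq_bigr => k _; rewrite mulr_sumr.
  by apply: eq_bigr => m _; ring.
have E2 : (\sum_k w k) * (\sum_k w k * a k ^+ 2) = \sum_k \sum_m w k * w m * a m ^+ 2.
  rewrite mulr_suml; apply: eq_bigr => k _; rewrite mulr_sumr.
  by apply: eq_bigr => m _; ring.
have E3 : (\sum_k w k) * (\sum_k w k * a k ^+ 2) = \sum_k \sum_m w k * w m * a k ^+ 2.
  rewrite E2 exchange_big; apply: eq_bigr => k _; apply: eq_bigr => m _; ring.
suff : (\sum_k w k * a k) ^+ 2 * 2 <= (\sum_k w k) * (\sum_k w k * a k ^+ 2) + (\sum_k w k) * (\sum_k w k * a k ^+ 2) by nra.
rewrite {1}E2 E3 -big_split /= E1 mulr_suml.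
apply: ler_sum => k _; rewrite mulr_suml -big_split; apply: ler_sum => m _ /=.
have := w0 k; have := w0 m => h1 h2.
have h3 : 0 <= w k * w m by apply: mulr_ge0.
have h4 : 0 <= w k * w m * (a k - a m) ^+ 2 by apply: mulr_ge0 => //; apply: sqr_ge0.
suff -> : w k * w m * (a k * a m) * 2 = w k * w m * a m ^+ 2 + w k * w m * a k ^+ 2 - w k * w m * (a k - a m) ^+ 2.
  by rewrite lerBlDr lerDl.
ring.
Qed.


Lemma n2_jensen (I : finType) (w : I -> R) (z : I -> C) : (forall k, 0 <= w k) ->
  n2 (\sum_k (w k)%:C%C * z k) <= (\sum_k w k) * \sum_k w k * n2 (z k).
Proof.
move=> w0; rewrite /n2 Re_sum Im_sum.
under eq_bigr do rewrite ReM. under [X in _ + X ^+ 2]eq_bigr do rewrite ImM.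
apply: le_trans (lerD (jensen _ w0) (jensen _ w0)) _.
rewrite -mulrDr -big_split /=; apply: ler_wpM2l; first by apply: sumr_ge0.
by apply: ler_sum => k _; rewrite mulrDr.
Qed.

Lemma N2_jensen (I : finType) d (w : I -> R) (y : I -> 'cV[C]_d) : (forall k, 0 <= w k) ->
  N2 (\sum_k (w k)%:C%C *: y k) <= (\sum_k w k) * \sum_k w k * N2 (y k).
Proof.
move=> w0; rewrite /N2.
apply: le_trans (_ : _ <= \sum_j (\sum_k w k) * \sum_k w k * n2 (y k j 0)) _.
  apply: ler_sum => j _; rewrite summxE.
  under eq_bigr do rewrite mxE. exact: n2_jensen.
rewrite -mulr_sumr; apply: ler_wpM2l; first by apply: sumr_ge0.
rewrite exchange_big /=; apply: ler_sum => k _; rewrite mulr_sumr; exact: lexx.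
Qed.

Lemma N2Z d (r : R) (v : 'cV[C]_d) : N2 (r%:C%C *: v) = r ^+ 2 * N2 v.
Proof.
rewrite /N2 mulr_sumr; apply: eq_bigr => j _; by rewrite mxE n2M n2R.
Qed.

Lemma N2N d (v : 'cV[C]_d) : N2 (- v) = N2 v.
Proof. rewrite /N2; apply: eq_bigr => j _; by rewrite mxE n2N. Qed.

Lemma N2_0 d : N2 (0 : 'cV[C]_d) = 0.
Proof. by rewrite /N2 big1 // => j _; rewrite mxE /n2 /= expr0n /= addr0. Qed.

Lemma n2_le_N2 d (v : 'cV[C]_d) j : n2 (v j 0) <= N2 v.
Proof.
rewrite /N2 (bigD1 j) //= lerDl; apply: sumr_ge0 => i _; exact: n2_ge0.
Qed.

Lemma N2_mul_bound d (A : 'M[C]_d) (v : 'cV[C]_d) :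
  N2 (A *m v) <= (d%:R * \sum_i \sum_j n2 (A i j)) * N2 v.
Proof.
rewrite /N2 [X in X * _]mulr_sumr mulr_suml; apply: ler_sum => i _.
rewrite mxE.
have -> : \sum_j A i j * v j 0 = \sum_j (1:R)%:C%C * (A i j * v j 0).
  by apply: eq_bigr => j _; rewrite mul1r.
apply: le_trans (n2_jensen _ _) _; first by move=> _; exact: ler01.
rewrite sumr_const card_ord -mulrA ler_wpM2l ?ler0n //.
rewrite mulr_suml; apply: ler_sum => j _; rewrite mul1r n2M ler_wpM2l ?n2_ge0 //.
by rewrite /N2; apply: n2_le_N2.
Qed.

Lemma N2_eq0 d (v : 'cV[C]_d) : N2 v = 0 -> v = 0.
Proof.
move=> h; apply/matrixP => j k; rewrite ord1 mxE; apply: n2_eq0.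
by move: h => /psumr_eq0P; apply => // i _; apply: n2_ge0.
Qed.

Lemma opnorm_bound d (A : 'M[C]_d) (v : 'cV[C]_d) :
  vnorm (A *m v) <= opnorm A * vnorm v.
Proof.
have vE (u : 'cV[C]_d) : vnorm u = Num.sqrt (N2 u) by [].
have [h0|hpos] := eqVneq (N2 v) 0.
  by rewrite (N2_eq0 h0) mulmx0 !vE N2_0 sqrtr0 mulr0.
have Npos : 0 < N2 v by rewrite lt_def hpos N2_ge0.
set s := Num.sqrt (N2 v).
have spos : 0 < s by rewrite sqrtr_gt0.
set u := (s^-1)%:C%C *: v.
have hu : vnorm u = 1.
  rewrite vE /u N2Z exprVn sqr_sqrtr ?N2_ge0 // mulVf ?sqrtr1 //.
have hAu : A *m u = (s^-1)%:C%C *: (A *m v) by rewrite /u scalemxAr.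
have hb : vnorm (A *m u) <= opnorm A.
  rewrite /opnorm; apply: ub_le_sup; last by exists u.
  exists (Num.sqrt (d%:R * \sum_i \sum_j n2 (A i j))) => r [w /= hw <-].
  rewrite vE ler_sqrt; last first.
    by apply: mulr_ge0; rewrite ?ler0n //; apply: sumr_ge0 => i _; apply: sumr_ge0 => j _; apply: n2_ge0.
  apply: le_trans (N2_mul_bound _ _) _.
  have : N2 w = 1 by rewrite -[N2 w]sqr_sqrtr ?N2_ge0 // -vE hw expr1n.
  by move=> ->; rewrite mulr1.
have sinv : 0 <= s^-1 by rewrite invr_ge0 ltW.
move: hb; rewrite hAu vE N2Z sqrtrM ?sqr_ge0 // sqrtr_sqr (ger0_norm sinv) => hb.
rewrite vE -/s mulrC -ler_pdivrMl // mulrC.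
Qed.

Lemma N2_op d (A : 'M[C]_d) (v : 'cV[C]_d) (b : R) :
  opnorm A <= b -> N2 (A *m v) <= b ^+ 2 * N2 v.
Proof.
move=> hb.
have vE (u : 'cV[C]_d) : vnorm u = Num.sqrt (N2 u) by [].
have h1 := opnorm_bound A v.
have h2 : vnorm (A *m v) <= b * vnorm v.
  apply: le_trans h1 _; apply: ler_wpM2r => //; rewrite vE sqrtr_ge0 //.
have h3 : 0 <= vnorm (A *m v) by rewrite vE sqrtr_ge0.
have -> : N2 (A *m v) = vnorm (A *m v) ^+ 2 by rewrite vE sqr_sqrtr ?N2_ge0.
have -> : N2 v = vnorm v ^+ 2 by rewrite vE sqr_sqrtr ?N2_ge0.
rewrite -exprMn; nra.
Qed.

Lemma adjmxM m k q (A : 'M[C]_(m, k)) (B : 'M[C]_(k, q)) :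
  adjmx (A *m B) = adjmx B *m adjmx A.
Proof. by rewrite /adjmx map_mxM trmx_mul. Qed.

Lemma adjmxB m k (A B : 'M[C]_(m, k)) : adjmx (A - B) = adjmx A - adjmx B.
Proof. by apply/matrixP => i j; rewrite !mxE rmorphB. Qed.

Lemma adjmxZ m k (r : R) (A : 'M[C]_(m, k)) : adjmx (r%:C%C *: A) = r%:C%C *: adjmx A.
Proof. apply/matrixP => i j; rewrite !mxE rmorphM /= conjE oppr0 //. Qed.

Lemma adjmx_sum m k (I : finType) (P : pred I) (F : I -> 'M[C]_(m, k)) :
  adjmx (\sum_(i | P i) F i) = \sum_(i | P i) adjmx (F i).
Proof.
apply/matrixP => a b; rewrite !mxE !summxE rmorph_sum; apply: eq_bigr => i _.
by rewrite !mxE.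
Qed.

Lemma adjmx_N2 d (v : 'cV[C]_d) : (adjmx v *m v) 0 0 = (N2 v)%:C%C.
Proof.
rewrite mxE /N2 rmorph_sum; apply: eq_bigr => j _; by rewrite !mxE conj_mul.
Qed.

Lemma loewner_red d (M : 'M[C]_d) (b : R) :
  adjmx M = M -> (forall w, N2 (M *m w) <= b * N2 w) ->
  loewner_le (M *m M) (b%:C%C)%:M.
Proof.
move=> hM hN v.
rewrite mulmxBr mulmxBl mul_mx_scalar -scalemxAl mulmxA -{1}hM -adjmxM -mulmxA.
have hP := adjmx_N2 v. have hQ := adjmx_N2 (M *m v).
move: hP hQ; set P := adjmx v *m v; set Q := adjmx (M *m v) *m (M *m v) => hP hQ.
clearbody P Q. rewrite !mxE hP hQ -rmorphM -rmorphB /= ler0c subr_ge0; exact: hN.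
Qed.

End Aux.
Section Comb.
Variable n : nat.

Definition flip (x : cube n) (l : 'I_n) : cube n :=
  [ffun i => if i == l then ~~ x l else x i].
Definition glue (S : {set 'I_n}) (y a : cube n) : cube n :=
  [ffun i => if i \in S then y i else a i].

Lemma agree_sym S (x y : cube n) : agree_on S x y = agree_on S y x.
Proof. by apply/forall_inP/forall_inP => h i /h; rewrite eq_sym. Qed.

Lemma agreeS_split (l : 'I_n) (x z : cube n) :
  agree_on (prefix_set n l.+1) z x = agree_on (prefix_set n l) z x && (z l == x l).
Proof.
apply/idP/andP.
  move/forall_inP => h; split; last by apply: h; rewrite inE ltnS.
  by apply/forall_inP => i; rewrite inE => hi; apply: h; rewrite inE ltnW.
case=> /forall_inP h hl; apply/forall_inP => i; rewrite inE ltnS leq_eqVlt.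
case/orP => [/eqP hi|hi]; last by apply: h; rewrite inE.
by have -> : i = l by apply: val_inj.
Qed.

Lemma flip_l (x : cube n) l : flip x l l = ~~ x l.
Proof. by rewrite ffunE eqxx. Qed.
Lemma flip_ne (x : cube n) l i : i != l -> flip x l i = x i.
Proof. by rewrite ffunE => /negbTE ->. Qed.

Lemma agreeS_flip (l : 'I_n) (x z : cube n) :
  agree_on (prefix_set n l.+1) z (flip x l) = agree_on (prefix_set n l) z x && (z l != x l).
Proof.
rewrite agreeS_split flip_l.
have -> : agree_on (prefix_set n l) z (flip x l) = agree_on (prefix_set n l) z x.
  apply: eq_forallb => i; rewrite inE; case hi: (i < l)%N => //=.
  rewrite flip_ne //; apply/eqP => e; by rewrite e ltnn in hi.
by case: (z l); case: (x l).
Qed.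

Lemma split_sum (V : nmodType) (F : cube n -> V) (l : 'I_n) (x : cube n) :
  \sum_(z | agree_on (prefix_set n l) z x) F z =
  \sum_(z | agree_on (prefix_set n l.+1) z x) F z +
  \sum_(z | agree_on (prefix_set n l.+1) z (flip x l)) F z.
Proof.
rewrite (bigID (fun z : cube n => z l == x l)) /=; congr (_ + _); apply: eq_bigl => z.
  by rewrite agreeS_split.
by rewrite agreeS_flip.
Qed.

Lemma agree_glue S (z y a : cube n) :
  (agree_on S z y && agree_on (~: S) z a) = (z == glue S y a).
Proof.
apply/andP/eqP.
  case=> /forall_inP h1 /forall_inP h2; apply/ffunP => i; rewrite ffunE.
  case: ifP => hi; first by apply/eqP/h1.
  by apply/eqP/h2; rewrite inE hi.
move=> ->; split; apply/forall_inP => i; rewrite ffunE ?inE.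
  by move=> ->.
by move/negbTE => ->.
Qed.

Lemma sum_glue (V : nmodType) (F : cube n -> V) S (y a : cube n) :
  \sum_(z | agree_on S z y && agree_on (~: S) z a) F z = F (glue S y a).
Proof. by rewrite (eq_bigl (fun z => z == glue S y a)) ?big_pred1_eq // => z; rewrite agree_glue. Qed.

Lemma sum_sel (V : nmodType) (F : cube n -> V) S (y u : cube n) :
  \sum_(z | agree_on S z y) (if agree_on (~: S) u z then F z else 0) = F (glue S y u).
Proof.
rewrite -big_mkcondr -(sum_glue F); apply: eq_bigl => z; by rewrite (agree_sym _ u).
Qed.

Lemma glue_id S (y z : cube n) : agree_on S z y -> glue S y z = z.
Proof.
move/forall_inP => h; apply/ffunP => i; rewrite ffunE; case: ifP => // hi.
by apply/esym/eqP/h.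
Qed.

End Comb.
Section Core.
Variable R : realType.
Local Notation C := (R[i]).
Variables (n d : nat) (f : cube n -> 'M[C]_d) (p : cube n -> R).

Lemma cond_prob_glue S (y z : cube n) : agree_on S z y ->
  cond_prob p S y z = p z / prob_agree p S y.
Proof. by move=> h; rewrite /cond_prob sum_glue glue_id. Qed.

Lemma rep0 S (x y : cube n) pi : covering_coupling p S x y pi ->
  (prob_agree p S y)^-1%:C%C *: \sum_(z | agree_on S z y) (p z)%:C%C *: f z =
  \sum_u \sum_v (pi u v)%:C%C *: f (glue S y u).
Proof.
case=> _ hc2 _ _.
rewrite scaler_sumr.
transitivity (\sum_(z | agree_on S z y) (cond_prob p S y z)%:C%C *: f z).
  apply: eq_bigr => z hz; rewrite scalerA -rmorphM cond_prob_glue // mulrC //.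
have E : forall z, (cond_prob p S y z)%:C%C *: f z = \sum_u \sum_v
    (if agree_on (~: S) u z then (pi u v)%:C%C *: f z else 0).
  move=> z; rewrite -hc2 rmorph_sum scaler_suml; apply: eq_bigr => u _.
  rewrite rmorph_sum scaler_suml; apply: eq_bigr => v _.
  by case: agree_on; rewrite ?mul1r ?mul0r ?rmorph0 ?scale0r.
under eq_bigr do rewrite E.
rewrite exchange_big; apply: eq_bigr => u _.
rewrite exchange_big; apply: eq_bigr => v _.
exact: (sum_sel (fun z => (pi u v)%:C%C *: f z)).
Qed.

Lemma rep1 S (x y : cube n) pi : covering_coupling p S x y pi ->
  (prob_agree p S x)^-1%:C%C *: \sum_(z | agree_on S z x) (p z)%:C%C *: f z =
  \sum_u \sum_v (pi u v)%:C%C *: f (glue S x v).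
Proof.
case=> _ _ hc3 _.
rewrite scaler_sumr.
transitivity (\sum_(z | agree_on S z x) (cond_prob p S x z)%:C%C *: f z).
  apply: eq_bigr => z hz; rewrite scalerA -rmorphM cond_prob_glue // mulrC //.
have E : forall z, (cond_prob p S x z)%:C%C *: f z = \sum_u \sum_v
    (if agree_on (~: S) v z then (pi u v)%:C%C *: f z else 0).
  move=> z; rewrite -hc3 rmorph_sum scaler_suml; apply: eq_bigr => u _.
  rewrite rmorph_sum scaler_suml; apply: eq_bigr => v _.
  by case: agree_on; rewrite ?mul1r ?mul0r ?rmorph0 ?scale0r.
under eq_bigr do rewrite E.
rewrite exchange_big; apply: eq_bigr => u _.
rewrite exchange_big; apply: eq_bigr => v _.
exact: (sum_sel (fun z => (pi u v)%:C%C *: f z)).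
Qed.

Lemma pi_sum S (x y : cube n) pi : covering_coupling p S x y pi ->
  0 < prob_agree p S y -> \sum_u \sum_v pi u v = 1.
Proof.
move=> hc hy; have [_ hc2 _ _] := hc.
transitivity ((prob_agree p S y)^-1 * \sum_(z | agree_on S z y) p z); last first.
  by rewrite mulVf // gt_eqF.
rewrite mulr_sumr.
transitivity (\sum_(z | agree_on S z y) cond_prob p S y z); last first.
  by apply: eq_bigr => z hz; rewrite cond_prob_glue // mulrC.
have E : forall z, cond_prob p S y z = \sum_u \sum_v
    (if agree_on (~: S) u z then pi u v else 0).
  move=> z; rewrite -hc2; apply: eq_bigr => u _; apply: eq_bigr => v _.
  by case: agree_on; rewrite ?mul1r ?mul0r.
rewrite (eq_bigr _ (fun z _ => E z)); symmetry.
rewrite exchange_big; apply: eq_bigr => u _.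
rewrite exchange_big; apply: eq_bigr => v _.
by rewrite (sum_sel (fun z => pi u v)).
Qed.

End Core.
Section Core2.
Variable R : realType.
Local Notation C := (R[i]).
Variables (n d : nat) (alpha : 'I_n -> R) (f : cube n -> 'M[C]_d) (p : cube n -> R).
Hypothesis alpha0 : forall i, 0 <= alpha i.
Hypothesis alpha_anti : forall i j : 'I_n, (i <= j)%N -> alpha j <= alpha i.
Hypothesis hop : forall x y, opnorm (f x - f y) <= dalpha alpha x y.
Hypothesis hscp : SCP p.

Lemma dalpha_two (a b : cube n) l j :
  (forall i, a i != b i -> i = l \/ i = j) -> dalpha alpha a b <= alpha l + alpha j.
Proof.
move=> h; rewrite /dalpha.
apply: le_trans (_ : _ <= \sum_i (alpha i * (i == l)%:R + alpha i * (i == j)%:R)) _.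
  apply: ler_sum => i _; case: (boolP (a i != b i)) => hi; last first.
    by rewrite mulr0 addr_ge0 // mulr_ge0 // ler0n.
  case: (h i hi) => ->; rewrite eqxx /= ?mulr1n ?mulr1.
    by rewrite lerDl mulr_ge0 // ler0n.
  by rewrite lerDr mulr_ge0 // ler0n.
rewrite big_split /= (bigD1 l) //= eqxx mulr1 big1 => [|i /negbTE ->]; last by rewrite mulr0.
rewrite (bigD1 j) //= eqxx mulr1 big1 => [|i /negbTE ->]; last by rewrite mulr0.
by rewrite !addr0.
Qed.

Lemma dist_glue (l : 'I_n) (x1 x0 u v : cube n) :
  (forall i, x1 i != x0 i -> i = l) -> covers_on (~: prefix_set n l.+1) u v ->
  dalpha alpha (glue (prefix_set n l.+1) x1 v) (glue (prefix_set n l.+1) x0 u)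
    <= alpha l + alpha l.
Proof.
move=> hd [hag|[j hj [huj hvj hoth]]].
  apply: dalpha_two => i; rewrite !ffunE; case: ifP => hi.
    by move/hd; left.
  move/forall_inP: hag => hag.
  by rewrite eq_sym (hag i) // inE hi.
apply: le_trans (dalpha_two (l := l) (j := j) _) _.
  move=> i; rewrite !ffunE; case: ifP => hi.
    by move/hd; left.
  case: (eqVneq i j) => [->|hij]; first by right.
  by rewrite (hoth i) ?eqxx // inE hi.
rewrite lerD2l; apply: alpha_anti.
by move: hj; rewrite !inE ltnS -ltnNge => /ltnW.
Qed.

Lemma core (l : 'I_n) (x1 x0 : cube n) (w : 'cV[C]_d) :
  x1 l = true -> x0 l = false -> (forall i, x1 i != x0 i -> i = l) ->
  0 < prob_agree p (prefix_set n l.+1) x1 -> 0 < prob_agree p (prefix_set n l.+1) x0 ->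
  N2 ((condE p f l.+1 x1 - condE p f l.+1 x0) *m w) <= (alpha l + alpha l) ^+ 2 * N2 w.
Proof.
move=> h1 h0 hd hp1 hp0.
set S := prefix_set n l.+1.
have hcov : covers_on S x1 x0.
  right; exists l; first by rewrite inE ltnS.
  split => // j _ hjl; apply/eqP; apply: contraNT hjl => /hd ->; by rewrite eqxx.
have [pi hc] := hscp hcov hp1 hp0.
have hps := pi_sum hc hp0.
have [hpi0 _ _ hcv] := hc.
rewrite /condE -/S (rep1 f hc) (rep0 f hc).
have -> : (\sum_u \sum_v (pi u v)%:C%C *: f (glue S x1 v) -
           \sum_u \sum_v (pi u v)%:C%C *: f (glue S x0 u)) *m w =
  \sum_(k : cube n * cube n) (pi k.1 k.2)%:C%C *:
     ((f (glue S x1 k.2) - f (glue S x0 k.1)) *m w).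
  rewrite -sumrB; under eq_bigr do rewrite -sumrB.
  rewrite mulmx_suml; under eq_bigr do rewrite mulmx_suml.
  rewrite pair_big /=; apply: eq_bigr => [[u v]] _ /=.
  by rewrite -scalerBr -scalemxAl.
apply: le_trans (N2_jensen _ _) _; first by case=> u v; apply: hpi0.
rewrite -(pair_big predT predT (fun u v => pi u v)) /= hps mul1r.
apply: le_trans (_ : _ <= \sum_(k : cube n * cube n) pi k.1 k.2 * ((alpha l + alpha l) ^+ 2 * N2 w)) _.
  apply: ler_sum => [[u v]] _ /=.
  case: (eqVneq (pi u v) 0) => [->|hne]; first by rewrite !mul0r.
  have hp : 0 < pi u v by rewrite lt_def hne hpi0.
  apply: ler_wpM2l; first exact: ltW.
  apply: N2_op; apply: le_trans (hop _ _) _.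
  exact: dist_glue (hcv _ _ hp).
by rewrite -mulr_suml -(pair_big predT predT (fun u v => pi u v)) /= hps mul1r.
Qed.

End Core2.
Unset Implicit Arguments.
Set Strict Implicit.
Set Printing Implicit Defensive.

Lemma adjmx_condE (R : realType) n d (f : cube n -> 'M[R[i]]_d) (p : cube n -> R) k y :
  (forall x, is_hermitian (f x)) -> adjmx (condE p f k y) = condE p f k y.
Proof.
move=> hf; rewrite /condE adjmxZ adjmx_sum; congr (_ *: _); apply: eq_bigr => z _.
by rewrite adjmxZ (hf z).
Qed.

Theorem lemma5p1 (R : realType) (n d : nat) (alpha : 'I_n -> R)
  (f : cube n -> 'M[R[i]]_d) (p : cube n -> R) :
  (forall i, 0 <= alpha i) ->
  (forall i j : 'I_n, (i <= j)%N -> alpha j <= alpha i) ->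
  (forall x, is_hermitian (f x)) ->
  (forall x y, opnorm (f x - f y) <= dalpha alpha x y) ->
  is_pmf p -> SCP p ->
  forall (l : 'I_n) (x : cube n), 0 < p x ->
    let M := condE p f l.+1 x - condE p f l x in
    loewner_le (M *m M) ((4 * alpha l ^+ 2)%:C%C)%:M.
Proof.
move=> a0 aanti hf hop hpmf hscp l x hx M.
have [p0 _] := hpmf.
have hM : adjmx M = M by rewrite /M adjmxB !adjmx_condE.
have -> : 4 * alpha l ^+ 2 = (alpha l + alpha l) ^+ 2 by ring.
apply: loewner_red => // w.
set S := prefix_set n l.+1.
set xf := flip x l.
set pa := prob_agree p S x.
set pb := prob_agree p S xf.
have hpa : 0 < pa.
  apply: lt_le_trans hx _; rewrite /pa /prob_agree (bigD1 x) /=; last by apply/forall_inP.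
  by rewrite lerDl sumr_ge0.
have hpb0 : 0 <= pb by rewrite sumr_ge0.
set A := \sum_(z | agree_on S z x) (p z)%:C%C *: f z.
set B := \sum_(z | agree_on S z xf) (p z)%:C%C *: f z.
have hEl : condE p f l x = ((pa + pb)^-1)%:C%C *: (A + B).
  by rewrite /condE split_sum /prob_agree split_sum.
have hEl1 : condE p f l.+1 x = (pa^-1)%:C%C *: A by [].
have hEl1' : condE p f l.+1 xf = (pb^-1)%:C%C *: B by [].
case: (eqVneq pb 0) => [pb0|pbne].
  have B0 : B = 0.
    rewrite /B big1 // => z hz.
    have -> : p z = 0 by move: pb0; rewrite /pb /prob_agree => /psumr_eq0P; apply.
    by rewrite rmorph0 scale0r.
  rewrite /M hEl hEl1 pb0 B0 !addr0 subrr mul0mx N2_0.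
  by rewrite mulr_ge0 ?sqr_ge0 ?N2_ge0.
have hpb : 0 < pb by rewrite lt_def pbne hpb0.
have hMe : M = (pb / (pa + pb))%:C%C *: (condE p f l.+1 x - condE p f l.+1 xf).
  have pan : pa != 0 by rewrite gt_eqF.
  have pabn : pa + pb != 0 by rewrite gt_eqF // addr_gt0.
  rewrite /M hEl hEl1 hEl1' scalerBr !scalerA -!rmorphM.
  have -> : pb / (pa + pb) * pa^-1 = pa^-1 - (pa + pb)^-1 by field; rewrite ?pan ?pabn ?pbne.
  have -> : pb / (pa + pb) * pb^-1 = (pa + pb)^-1 by field; rewrite ?pan ?pabn ?pbne.
  by rewrite rmorphB scalerBl scalerDr opprD addrA.
rewrite hMe -scalemxAl N2Z.
have hc : (pb / (pa + pb)) ^+ 2 <= 1.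
  have h1 : 0 <= pb / (pa + pb) by rewrite divr_ge0 // addr_ge0 // ltW.
  have h2 : pb / (pa + pb) <= 1 by rewrite ler_pdivrMr ?mul1r ?lerDr ?ltW // addr_gt0.
  by rewrite expr_le1.
have hcore : N2 ((condE p f l.+1 x - condE p f l.+1 xf) *m w) <= (alpha l + alpha l) ^+ 2 * N2 w.
  have hd1 : forall i, x i != xf i -> i = l.
    move=> i; case: (eqVneq i l) => // hil; by rewrite /xf flip_ne // eqxx.
  case hxl : (x l).
    apply: core => //; by rewrite /xf flip_l hxl.
  rewrite -opprB mulNmx N2N.
  apply: core => //; first by rewrite /xf flip_l hxl.
  by move=> i; rewrite eq_sym; apply: hd1.
apply: le_trans hcore; rewrite -[X in _ <= X]mul1r; apply: ler_wpM2r => //; exact: N2_ge0.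
Qed.
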